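(* Let $(\mathfrak g,[\cdot,\cdot]_{\mathfrak g},E,S)$ be a quadratic ENL algebra and $K:\mathfrak g^*\to\mathfrak g$ a linear map. Then $K$ is an ENE-relative Rota–Baxter operator on $(\mathfrak g,[\cdot,\cdot]_{\mathfrak g},E)$ with respect to the coadjoint ENE-representation $(\mathfrak g^*;E^*,\mathrm{ad}^* )$ if and only if $B:=K\circ S^\sharp:\mathfrak g\to\mathfrak g$ is a Rota–Baxter operator of weight $0$ on the ENL algebra $(\mathfrak g,[\cdot,\cdot]_{\mathfrak g},E)$, i.e. $[Bx,By]_{\mathfrak g}=B([Bx,y]_{\mathfrak g}+[x,By]_{\mathfrak g})$ for all $x,y$ and $E\circ B=B\circ E$.
   Context: Vector spaces are finite-dimensional over an algebraically closed field of characteristic zero. An ENL algebra is a Lie algebra with linear $E$ satisfying $E[x,y]=[x,Ey]$ for all $x,y$. A quadratic ENL algebra $(\mathfrak g,E,S)$ is an ENL algebra with nondegenerate symmetric bilinear form $S$ such that $S([x,y],z)+S(y,[x,z])=0$ and $S(Ex,y)=S(x,Ey)$; $S^\sharp:\mathfrak g\to\mathfrak g^*$ is $\langle S^\sharp x,y\rangle=S(x,y)$. Coadjoint: $\langle\mathrm{ad}^*_x\xi,y\rangle=-\langle\xi,[x,y]\rangle$, $E^*$ the dual map. An ENE-relative Rota–Baxter operator with respect to $(\mathfrak g^*;E^*,\mathrm{ad}^* )$ is a linear $K:\mathfrak g^*\to\mathfrak g$ with $[K\xi,K\eta]_{\mathfrak g}=K(\mathrm{ad}^*_{K\xi}\eta-\mathrm{ad}^*_{K\eta}\xi)$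 for all $\xi,\eta$ and $E\circ K=K\circ E^*$. *)

(* Defs.v *)
From HB Require Import structures.
From mathcomp Require Import all_boot all_algebra all_field.
Set Implicit Arguments. Unset Strict Implicit. Unset Printing Implicit Defensive.
Import GRing.Theory.
Local Open Scope ring_scope.

(* Finite-dimensional vector spaces over F are modelled by [vectType F];
   the dual g^* of g is the space of linear forms 'Hom(g, GRing.regular F). *)
Section ENL.
Variables (F : fieldType) (V : vectType F).

Definition dualv := 'Hom(V, GRing.regular F).

Definition is_lie_bracket (br : V -> V -> V) : Prop :=
  [/\ (forall a x y z, br (a *: x + y) z = a *: br x z + br y z),
      (forall a x y z, br z (a *: x + y) = a *: br z x + br z y),
      (forall x, br x x = 0) &
      (forall x y z, br x (br y z) + br y (br z x) + br z (br x y) = 0)].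

Definition is_ENL (br : V -> V -> V) (E : 'End(V)) : Prop :=
  is_lie_bracket br /\ (forall x y, E (br x y) = br x (E y)).

Definition is_quadratic_ENL (br : V -> V -> V) (E : 'End(V)) (S : V -> V -> F)
  : Prop :=
  is_ENL br E /\
  [/\ (forall a x y z, S (a *: x + y) z = a * S x z + S y z),
      (forall x y, S x y = S y x),
      (forall x, (forall y, S x y = 0) -> x = 0),
      (forall x y z, S (br x y) z + S y (br x z) = 0) &
      (forall x y, S (E x) y = S x (E y))].

Definition Ssharp (S : V -> V -> F) (x : V) : dualv := linfun (fun y : V => (S x y : GRing.regular F)).

Definition coad (br : V -> V -> V) (x : V) (xi : dualv) : dualv :=
  linfun (fun y : V => - xi (br x y)).

Definition dualmap (E : 'End(V)) (xi : dualv) : dualv := comp_lfun xi E.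

Definition is_ENE_relRB_coad (br : V -> V -> V) (E : 'End(V)) (K : 'Hom(dualv, V))
  : Prop :=
  (forall xi eta : dualv,
      br (K xi) (K eta) = K (coad br (K xi) eta - coad br (K eta) xi)) /\
  (forall xi, E (K xi) = K (dualmap E xi)).

Definition is_RB0_ENL (br : V -> V -> V) (E : 'End(V)) (B : V -> V) : Prop :=
  (forall x y, br (B x) (B y) = B (br (B x) y + br x (B y))) /\
  (forall x, E (B x) = B (E x)).

End ENL.

(* Main.v *)
Require Import Defs.
From HB Require Import structures.
From mathcomp Require Import all_boot all_algebra all_field.
Local Open Scope ring_scope.
Import GRing.Theory.

Lemma linfunE' (F : fieldType) (aT rT : vectType F) (f : aT -> rT)
  (hf : forall a x y, f (a *: x + y) = a *: f x + f y) x : linfun f x = f x.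
Proof.
pose fL : {linear aT -> rT} := HB.pack f (GRing.isLinear.Build F aT rT _ f hf).
exact: (lfunE fL x).
Qed.

Section H.
Variables (F : fieldType) (V : vectType F) (br : V -> V -> V) (E : 'End(V)) (S : V -> V -> F).
Hypothesis hQ : is_quadratic_ENL br E S.

Lemma Sl a x y z : S (a *: x + y) z = a * S x z + S y z.
Proof. by case: hQ => _ [h ? ? ? ?]; apply: h. Qed.
Lemma Ssym x y : S x y = S y x.
Proof. by case: hQ => _ [? h ? ? ?]; apply: h. Qed.
Lemma Snd x : (forall y, S x y = 0) -> x = 0.
Proof. by case: hQ => _ [? ? h ? ?]; apply: h. Qed.
Lemma Sinv x y z : S (br x y) z + S y (br x z) = 0.
Proof. by case: hQ => _ [? ? ? h ?]; apply: h. Qed.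
Lemma SE x y : S (E x) y = S x (E y).
Proof. by case: hQ => _ [? ? ? ? h]; apply: h. Qed.
Lemma brl a x y z : br (a *: x + y) z = a *: br x z + br y z.
Proof. by case: hQ => [[[h ? ? ?] ?] ?]; apply: h. Qed.
Lemma brr a x y z : br z (a *: x + y) = a *: br z x + br z y.
Proof. by case: hQ => [[[? h ? ?] ?] ?]; apply: h. Qed.
Lemma brxx x : br x x = 0.
Proof. by case: hQ => [[[? ? h ?] ?] ?]; apply: h. Qed.

Lemma br_add x y z : br (x + y) z = br x z + br y z.
Proof. by rewrite -[x]scale1r brl !scale1r. Qed.
Lemma br_addr x y z : br z (x + y) = br z x + br z y.
Proof. by rewrite -[x]scale1r brr !scale1r. Qed.
Lemma br_opp x y : br y x = - br x y.
Proof.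
have h : br (x + y) (x + y) = 0 by rewrite brxx.
rewrite br_add !br_addr !brxx add0r addr0 in h.
by apply/eqP; rewrite -addr_eq0 addrC h.
Qed.

Lemma Sr a x y z : S z (a *: x + y) = a * S z x + S z y.
Proof. by rewrite Ssym Sl !(Ssym z). Qed.

Lemma SshE x y : Ssharp S x y = S x y.
Proof. by rewrite /Ssharp linfunE' // => a u v; rewrite Sr. Qed.

Lemma coadE x (xi : dualv V) y : coad br x xi y = - xi (br x y).
Proof.
rewrite /coad linfunE' // => a u v.
by rewrite brr linearD linearZ /= opprD scalerN.
Qed.

Lemma Ssh_lin a x y : Ssharp S (a *: x + y) = a *: Ssharp S x + Ssharp S y.
Proof. by apply/lfunP => z; rewrite add_lfunE scale_lfunE !SshE Sl. Qed.

Lemma coad_Ssh x y : coad br x (Ssharp S y) = Ssharp S (br x y).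
Proof.
apply/lfunP => z; rewrite coadE !SshE.
by apply/eqP; rewrite eq_sym -subr_eq0 opprK Sinv.
Qed.

Lemma dual_Ssh y : dualmap E (Ssharp S y) = Ssharp S (E y).
Proof. by apply/lfunP => z; rewrite /dualmap comp_lfunE !SshE SE. Qed.

Lemma Ssh_surj (xi : dualv V) : exists x, xi = Ssharp S x.
Proof.
pose L : 'Hom(V, dualv V) := linfun (Ssharp S).
have LE : forall x, L x = Ssharp S x by move=> x; rewrite linfunE' // => *; rewrite Ssh_lin.
have kerL : lker L == 0%VS.
  apply/lker0P => x y; rewrite !LE => hxy.
  apply/eqP; rewrite -subr_eq0; apply/eqP/Snd => z.
  have := congr1 (fun f : dualv V => f z) hxy.
  rewrite !SshE => h.
  have -> : x - y = (-1) *: y + x by rewrite scaleN1r addrC.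
  by rewrite Sl h mulN1r addNr.
have imL : limg L = fullv.
  apply/eqP; rewrite eqEdim subvf limg_dim_eq ?(eqP kerL) ?capv0 //.
  rewrite !dimvf; have -> : dim (dualv V) = (dim V * 1)%N by []. by rewrite muln1 leqnn.
have : xi \in limg L by rewrite imL memvf.
by case/memv_imgP => x _ ->; exists x; rewrite LE.
Qed.

Lemma Ssh_add x y : Ssharp S (x + y) = Ssharp S x + Ssharp S y.
Proof. by rewrite -[x]scale1r Ssh_lin !scale1r. Qed.
Lemma Ssh_opp x : Ssharp S (- x) = - Ssharp S x.
Proof.
have h0 : Ssharp S 0 = 0.
  by apply: (addrI (Ssharp S 0)); rewrite -Ssh_add !addr0.
by rewrite -[- x]addr0 -scaleN1r Ssh_lin h0 addr0 scaleN1r.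
Qed.

Lemma key (K : 'Hom(dualv V, V)) x y :
  K (coad br (K (Ssharp S x)) (Ssharp S y) - coad br (K (Ssharp S y)) (Ssharp S x))
  = K (Ssharp S (br (K (Ssharp S x)) y + br x (K (Ssharp S y)))).
Proof.
by rewrite !coad_Ssh Ssh_add (br_opp x (K (Ssharp S y))) Ssh_opp opprK.
Qed.
End H.

Theorem proposition6p7 (F : closedFieldType) (hchar : [pchar F] =i pred0)
  (V : vectType F) (br : V -> V -> V) (E : 'End(V)) (S : V -> V -> F)
  (hQ : is_quadratic_ENL br E S) (K : 'Hom(dualv V, V)) :
  is_ENE_relRB_coad br E K <-> is_RB0_ENL br E (fun x => K (Ssharp S x)).
Proof.
split.
- case=> Hrb HE; split.
  + by move=> x y; rewrite Hrb (@key _ _ _ _ _ hQ).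
  + by move=> x; rewrite HE (@dual_Ssh _ _ _ _ _ hQ).
- case=> Hrb HE; split.
  + move=> xi eta.
    have [x ->] := @Ssh_surj _ _ _ _ _ hQ xi.
    have [y ->] := @Ssh_surj _ _ _ _ _ hQ eta.
    by rewrite Hrb (@key _ _ _ _ _ hQ).
  + move=> xi; have [x ->] := @Ssh_surj _ _ _ _ _ hQ xi.
    by rewrite HE (@dual_Ssh _ _ _ _ _ hQ).
Qed.
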